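(* Let $n\ge2$, $\alpha=n-2$ and $l,m\in\mathbb Z_{\ge0}$. Then $$h_n\bigl(R^{(\alpha)}_{l,m}(z_n,w_n;q^2)^*\,R^{(\alpha)}_{l,m}(z_n,w_n;q^2)\bigr)=c^{(\alpha)}_{l,m}:=\frac{(1-q^{2(\alpha+1)})q^{2m(\alpha+1)}}{1-q^{2(\alpha+l+m+1)}}\cdot\frac{(q^2;q^2)_l(q^2;q^2)_m}{(q^{2(\alpha+1)};q^2)_l(q^{2(\alpha+1)};q^2)_m}.$$
   Context: Fix $0<q<1$, $n\ge2$. $\mathcal Z_n$ is the unital complex $*$-algebra generated by $z_1,\dots,z_n,w_1,\dots,w_n$ subject to $z_iz_j=qz_jz_i$ $(i<j)$, $w_jw_i=qw_iw_j$ $(i<j)$, $w_iz_j=qz_jw_i$ $(i\ne j)$, $w_iz_i=z_iw_i+(1-q^2)\sum_{k<i}z_kw_k$, with involution $z_i^*=w_i$. $z^\lambda w^\mu=z_1^{\lambda_1}\cdots z_n^{\lambda_n}w_n^{\mu_n}\cdots w_1^{\mu_1}$, $|\lambda|=\sum\lambda_i$, $Q_i=\sum_{k=1}^iz_kw_k$; $Q_n$ is central and $\widetilde{\mathcal Z}_n=\mathcal Z_n/(Q_n-1)$. $(a;p)_k=\prod_{j=0}^{k-1}(1-ap^j)$. $h_n$ is the linear functional on $\widetilde{\mathcal Z}_n$ with $h_n(z^\lambda w^\mu)=\delta_{\lambda\mu}q^{-2((n-1)\lambda_1+(n-2)\lambda_2+\cdots+\lambda_{n-1})}\frac{(q^{-2};q^{-2})_{\lambda_1}\cdots(q^{-2};q^{-2})_{\lambda_n}(q^{-2};q^{-2})_{n-1}}{(q^{-2};q^{-2})_{|\lambda|+n-1}}$.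 Little $q$-Jacobi: $P^{(\alpha,\beta)}_m(x;p)=\sum_{k=0}^m\frac{(p^{-m};p)_k(p^{\alpha+\beta+m+1};p)_k}{(p^{\alpha+1};p)_k(p;p)_k}(px)^k$. $q$-disk polynomials in $\widetilde{\mathcal Z}_n$: $R^{(\alpha)}_{l,m}(z_n,w_n;q^2)=z_n^{l-m}P^{(\alpha,l-m)}_m(Q_{n-1};q^2)$ if $l\ge m$ and $=P^{(\alpha,m-l)}_l(Q_{n-1};q^2)w_n^{m-l}$ if $l\le m$. *)

(* Defs.v *)
From HB Require Import structures.
From mathcomp Require Import all_boot all_order all_algebra.
Set Implicit Arguments. Unset Strict Implicit. Unset Printing Implicit Defensive.
Import Order.TTheory GRing.Theory Num.Theory.
Local Open Scope ring_scope.

Section Defs.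
Variable C : numClosedFieldType.

Definition qpoch (a p : C) (k : nat) : C := \prod_(j < k) (1 - a * p ^+ j).

Variable A : lalgType C.

Definition little_qJacobi (alpha beta m : nat) (p : C) (x : A) : A :=
  \sum_(k < m.+1)
     ((qpoch (p ^- m) p k * qpoch (p ^+ (alpha + beta + m + 1)) p k)
        / (qpoch (p ^+ (alpha + 1)) p k * qpoch p p k) * p ^+ k) *: x ^+ k.

(* generators are indexed 0..n-1 (paper: 1..n) *)
Variables (n : nat) (q : C) (z w : nat -> A) (star : A -> A).

(* Q_i = sum_{k=1}^i z_k w_k  (paper index i; here sum over k < i, 0-based) *)
Definition Qsum (i : nat) : A := \sum_(k < n | (k < i)%N) z k * w k.

Definition tZn_structure : Prop :=
  [/\ (forall i j, (i < j < n)%N -> z i * z j = q *: (z j * z i)),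
      (forall i j, (i < j < n)%N -> w j * w i = q *: (w i * w j)),
      (forall i j, (i < n)%N -> (j < n)%N -> i <> j -> w i * z j = q *: (z j * w i)),
      (forall i, (i < n)%N -> w i * z i = z i * w i + (1 - q ^+ 2) *: Qsum i) &
      Qsum n = 1]
  /\ [/\ (forall i, (i < n)%N -> star (z i) = w i),
          (forall x y, star (x + y) = star x + star y),
          (forall (a : C) x, star (a *: x) = Num.conj a *: star x),
          (forall x y, star (x * y) = star y * star x) &
          (forall x, star (star x) = x)].

Definition zw_mon (lam mu : nat -> nat) : A :=
  (\prod_(i < n) z i ^+ lam i) * (\prod_(i < n) w (n.-1 - i)%N ^+ mu (n.-1 - i)%N).

Definition h_value (lam mu : nat -> nat) : C :=
  if [forall i : 'I_n, lam i == mu i] then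
    q ^- (2 * \sum_(i < n) (n.-1 - i) * lam i)%N
    * (\prod_(i < n) qpoch (q ^- 2) (q ^- 2) (lam i))
    * qpoch (q ^- 2) (q ^- 2) n.-1
    / qpoch (q ^- 2) (q ^- 2) (\sum_(i < n) lam i + n.-1)%N
  else 0.

Definition is_hn (h : A -> C) : Prop :=
  [/\ (forall x y, h (x + y) = h x + h y),
      (forall (a : C) x, h (a *: x) = a * h x) &
      (forall lam mu, h (zw_mon lam mu) = h_value lam mu)].

Definition qdisk (alpha l m : nat) : A :=
  if (m <= l)%N then
    z n.-1 ^+ (l - m) * little_qJacobi alpha (l - m) m (q ^+ 2) (Qsum n.-1)
  else
    little_qJacobi alpha (m - l) l (q ^+ 2) (Qsum n.-1) * w n.-1 ^+ (m - l).

End Defs.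

Definition c_const (C : numClosedFieldType) (q : C) (alpha l m : nat) : C :=
  (1 - q ^+ (2 * (alpha + 1))) * q ^+ (2 * m * (alpha + 1))
    / (1 - q ^+ (2 * (alpha + l + m + 1)))
  * (qpoch (q ^+ 2) (q ^+ 2) l * qpoch (q ^+ 2) (q ^+ 2) m)
    / (qpoch (q ^+ (2 * (alpha + 1))) (q ^+ 2) l
       * qpoch (q ^+ (2 * (alpha + 1))) (q ^+ 2) m).

(* Main.v *)
Require Import Defs.
From mathcomp Require Import all_boot all_order all_algebra.
From mathcomp.algebra_tactics Require Import ring.
From mathcomp Require Import zify.
Import Order.TTheory GRing.Theory Num.Theory.
Local Open Scope ring_scope.

Section Scal.
Variable C : numClosedFieldType.

Lemma qp0 (a r : C) : qpoch a r 0 = 1.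
Proof. by rewrite /qpoch big_ord0. Qed.

Lemma qpS (a r : C) k : qpoch a r k.+1 = qpoch a r k * (1 - a * r ^+ k).
Proof. by rewrite /qpoch big_ord_recr. Qed.

Lemma qpSl (a r : C) k : qpoch a r k.+1 = (1 - a) * qpoch (a * r) r k.
Proof.
rewrite /qpoch big_ord_recl expr0 mulr1; congr (_ * _).
by apply: eq_bigr => i _; rewrite exprS mulrA.
Qed.

Lemma qpD (a r : C) k l : qpoch a r (k + l) = qpoch a r k * qpoch (a * r ^+ k) r l.
Proof.
elim: l => [|l IH]; first by rewrite addn0 qp0 mulr1.
by rewrite addnS !qpS IH -mulrA -mulrA exprD.
Qed.

Variable p : C.
Hypothesis hp0 : 0 < p.
Hypothesis hp1 : p < 1.

Lemma pX_neq1 e : (0 < e)%N -> p ^+ e != 1.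
Proof.
move=> he; apply/negP => /eqP H.
have := exprn_ilt1 e (ltW hp0) hp1; rewrite H ltxx => /esym.
by rewrite -lt0n he.
Qed.

Lemma pX_neq0 e : p ^+ e != 0.
Proof. by rewrite expf_neq0 // gt_eqF. Qed.

Lemma qp_neq0 e k : (0 < e)%N -> qpoch (p ^+ e) p k != 0.
Proof.
move=> he; rewrite /qpoch prodf_seq_neq0; apply/allP => i _ /=.
by rewrite -exprD subr_eq0 eq_sym pX_neq1 // addn_gt0 he.
Qed.

Lemma qpi_neq0 e k : (0 < e)%N -> qpoch ((p ^+ e)^-1) (p^-1) k != 0.
Proof.
move=> he; rewrite /qpoch prodf_seq_neq0; apply/allP => i _ /=.
rewrite -exprVn -exprD exprVn subr_eq0 eq_sym invr_eq1 pX_neq1 //.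
by rewrite addn_gt0 he.
Qed.


Lemma onem_neq0 e : (0 < e)%N -> 1 - p ^+ e != 0.
Proof. by move=> he; rewrite subr_eq0 eq_sym pX_neq1. Qed.

Variable N : nat.
Hypothesis hN : (0 < N)%N.

Definition G k j d := (1 - p ^+ N) * p ^+ ((N + k) * j) * qpoch p p (j + d)
   / qpoch (p ^+ (N + k)) p (j + d).+1.

Lemma G_krec k j d : G k.+1 j d = p ^+ j * (G k j d - G k j.+1 d).
Proof.
rewrite /G addSn.
set u := p ^+ (N + k).
have Hu1 : p ^+ (N + k.+1) = u * p by rewrite addnS exprS mulrC.
rewrite Hu1 !exprM Hu1 exprMn exprSr.
rewrite (qpS p p (j + d)) (qpSl u p (j + d).+1) (qpSl u p (j + d)) (qpS (u * p) p (j + d)).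
have HX : qpoch (u * p) p (j + d) != 0 by rewrite -Hu1 qp_neq0 // addn_gt0 hN.
have H1 : 1 - u != 0 by rewrite onem_neq0 // addn_gt0 hN.
have H2 : 1 - u * p * p ^+ (j + d) != 0.
  by rewrite -Hu1 -exprD onem_neq0 // !addn_gt0 hN.
move: HX H1 H2.
set X := qpoch (u * p) p (j + d).
set Y := qpoch p p (j + d).
set Z := p ^+ (j + d).
move=> HX H1 H2.
rewrite -/u; clearbody u X Y Z. field.
by rewrite HX H1 H2.
Qed.

Lemma G_drec k j d : G k j d.+1 = G k j d - p ^+ d.+1 * G k.+1 j d.
Proof.
rewrite /G addnS.
set u := p ^+ (N + k).
have Hu1 : p ^+ (N + k.+1) = u * p by rewrite addnS exprS mulrC.
rewrite Hu1 !exprM Hu1 exprMn.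
rewrite (qpS p p (j + d)) (qpSl u p (j + d).+1) (qpSl u p (j + d)) (qpS (u * p) p (j + d)).
have HX : qpoch (u * p) p (j + d) != 0 by rewrite -Hu1 qp_neq0 // addn_gt0 hN.
have H1 : 1 - u != 0 by rewrite onem_neq0 // addn_gt0 hN.
have H2 : 1 - u * p * p ^+ (j + d) != 0.
  by rewrite -Hu1 -exprD onem_neq0 // !addn_gt0 hN.
have Hj : p ^+ d.+1 = p ^+ (j + d).+1 / p ^+ j.
  by rewrite -addnS exprD mulrC mulKf // pX_neq0.
rewrite Hj exprS.
have Hpj : p ^+ j != 0 by rewrite pX_neq0.
move: HX H1 H2 Hpj.
set X := qpoch (u * p) p (j + d).
set Y := qpoch p p (j + d).
set Z := p ^+ (j + d).
set V := p ^+ j.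
move=> HX H1 H2 Hpj.
field.
by rewrite HX H1 H2 Hpj.
Qed.


Lemma qp_inv_aux j :
  qpoch (p^-1) (p^-1) j * qpoch (p ^+ N.+1) p j
  = p ^+ (N * j) * qpoch p p j * qpoch ((p^-1) ^+ N.+1) (p^-1) j.
Proof.
elim: j => [|j IH]; first by rewrite !qp0 muln0 expr0 !mulr1.
rewrite !qpS mulnS exprD.
have E : qpoch (p^-1) (p^-1) j * (1 - p^-1 * p^-1 ^+ j) *
  (qpoch (p ^+ N.+1) p j * (1 - p ^+ N.+1 * p ^+ j))
  = (qpoch (p^-1) (p^-1) j * qpoch (p ^+ N.+1) p j) *
    ((1 - p^-1 * p^-1 ^+ j) * (1 - p ^+ N.+1 * p ^+ j)) by ring.
rewrite E IH.
have Hp : p != 0 by rewrite gt_eqF.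
have Hw : p ^+ j != 0 by rewrite pX_neq0.
have Hv : p ^+ N != 0 by rewrite pX_neq0.
rewrite !exprVn exprS.
move: (qpoch p p j) (qpoch ((p^-1) ^+ N.+1) (p^-1) j) => a b.
move: Hw Hv; move: (p ^+ j) (p ^+ N) => w v Hw Hv.
field.
by rewrite Hp Hw Hv.
Qed.

Lemma G_base j :
  qpoch (p^-1) (p^-1) j * qpoch (p^-1) (p^-1) N / qpoch (p^-1) (p^-1) (j + N)
  = G 0 j 0.
Proof.
rewrite addnC qpD /G !addn0.
have HN : qpoch (p^-1) (p^-1) N != 0.
  by have := qpi_neq0 1 N isT; rewrite expr1.
have Hj : qpoch (p^-1 * p^-1 ^+ N) (p^-1) j != 0.
  by rewrite -exprS exprVn qpi_neq0.
rewrite qpSl -exprSr.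
have H1 : 1 - p ^+ N != 0 by rewrite onem_neq0.
have Hj2 : qpoch (p ^+ N.+1) p j != 0 by rewrite qp_neq0.
have E := qp_inv_aux j.
rewrite -exprS in Hj *.
have -> : qpoch (p^-1) (p^-1) j = p ^+ (N * j) * qpoch p p j * qpoch ((p^-1) ^+ N.+1) (p^-1) j
   / qpoch (p ^+ N.+1) p j by rewrite -E mulfK.
rewrite exprM.
move: Hj HN H1 Hj2.
move: (qpoch (p ^-1) (p ^-1) N) (qpoch ((p^-1) ^+ N.+1) (p^-1) j) (qpoch (p ^+ N.+1) p j) (qpoch p p j) (p ^+ N) => a b c e f Hb Ha H1 Hc.
field.
by rewrite Hb Ha H1 Hc.
Qed.


Lemma sum_shift (g : nat -> C) n :
  \sum_(i < n) g i.+1 = \sum_(i < n) g i + g n - g 0%N.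
Proof.
have E1 : \sum_(i < n.+1) g i = g 0%N + \sum_(i < n) g i.+1 by rewrite big_ord_recl.
have E2 : \sum_(i < n.+1) g i = \sum_(i < n) g i + g n by rewrite big_ord_recr.
rewrite -E2 E1; ring.
Qed.

Lemma prodr_const_ord (x : C) n : x ^+ n = \prod_(i < n) x.
Proof. by rewrite prodr_const card_ord. Qed.

Definition piD D i := \prod_(r < i) (p ^+ D - p ^+ r).
Definition gam D i := piD D i / qpoch p p i.
Definition PiY (y c : C) i := \prod_(r < i) (y - c * p ^+ r).
Definition Om (c : C) D i := \prod_(r < D - i) (1 - c * p ^+ (i + r)).

Lemma piD_S D i : piD D.+1 i.+1 = (p ^+ D.+1 - 1) * p ^+ i * piD D i.
Proof.
rewrite /piD big_ord_recl expr0 -mulrA; congr (_ * _).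
rewrite (prodr_const_ord p i) -big_split /=; apply: eq_bigr => r _.
by rewrite /bump /= add1n !exprS mulrBr.
Qed.

Lemma piD_Sr D i : piD D i.+1 = piD D i * (p ^+ D - p ^+ i).
Proof. by rewrite /piD big_ord_recr. Qed.

Lemma gam_S D i : gam D.+1 i.+1 = p ^+ i.+1 * gam D i.+1 - p ^+ i * gam D i.
Proof.
rewrite /gam piD_S piD_Sr qpS.
have Hq : qpoch p p i != 0 by have := qp_neq0 1 i isT; rewrite expr1.
have H1 : 1 - p * p ^+ i != 0 by rewrite -exprS onem_neq0.
move: Hq H1; move: (qpoch p p i) (piD D i) => a b Ha H1.
rewrite !exprS.
move: H1; move: (p ^+ i) (p ^+ D) => u v H1.
field.
by rewrite Ha H1.
Qed.

Lemma gam0 D : gam D 0 = 1.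
Proof. by rewrite /gam /piD big_ord0 qp0 divr1. Qed.

Lemma gam_over D : gam D D.+1 = 0.
Proof. by rewrite /gam piD_Sr subrr mulr0 mul0r. Qed.

Lemma qCV D (y c : C) :
  \sum_(i < D.+1) gam D i * PiY y c i * Om c D i = qpoch y p D.
Proof.
elim: D y c => [|D IH] y c.
  by rewrite big_ord_recl big_ord0 gam0 /PiY /Om big_ord0 big_ord0 qp0; ring.
rewrite qpSl -(IH (y * p) (c * p)) big_distrr /=.
rewrite big_ord_recl /= gam0 /PiY big_ord0 mul1r.
set g := fun s : nat => p ^+ s * gam D s * PiY y c s * Om c D.+1 s.
have Hf : forall s : 'I_D.+1,
   gam D.+1 (bump 0 s) * \prod_(r < bump 0 s) (y - c * p ^+ r) * Om c D.+1 (bump 0 s)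
   = g (s.+1) - p ^+ s * gam D s * PiY y c s.+1 * Om c D.+1 s.+1.
  move=> s; rewrite /bump leq0n add1n gam_S /g /PiY; ring.
rewrite (eq_bigr _ (fun s _ => Hf s)) sumrB (sum_shift g).
have Hg1 : g D.+1 = 0 by rewrite /g gam_over; ring.
have Hg0 : g 0%N = Om c D.+1 0 by rewrite /g gam0 /PiY big_ord0; ring.
rewrite Hg1 Hg0.
have -> : forall a b c0 : C, 1 * c0 + (a + 0 - c0 - b) = a - b by move=> *; ring.
rewrite -sumrB.
apply: eq_bigr => s _.
have Hs : (s <= D)%N by rewrite -ltnS ltn_ord.
have EO : Om c D.+1 s = (1 - c * p ^+ s) * Om c D.+1 s.+1.
  rewrite /Om (subSn Hs) big_ord_recl addn0; congr (_ * _).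
  by apply: eq_bigr => r _ /=; rewrite /bump leq0n add1n addnS addSn.
have EO2 : Om (c * p) D s = Om c D.+1 s.+1.
  rewrite /Om subSS; apply: eq_bigr => r _.
  by rewrite -mulrA -exprS addSn.
have EP : PiY (y * p) (c * p) s = p ^+ s * PiY y c s.
  rewrite /PiY (prodr_const_ord p s) -big_split /=; apply: eq_bigr => r _.
  ring.
have EP2 : PiY y c s.+1 = PiY y c s * (y - c * p ^+ s).
  by rewrite /PiY big_ord_recr.
rewrite /g EO EO2 EP2 (EP : \prod_(r < s) (y * p - c * p * p ^+ r) = _) /PiY.
ring.
Qed.


Definition aco D d k :=
  (qpoch (p ^- D) p k * qpoch (p ^+ (N + d + D)) p k)
    / (qpoch (p ^+ N) p k * qpoch p p k) * p ^+ k.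

Lemma F1 D i : piD D i = qpoch (p ^- D) p i * (p ^+ D) ^+ i.
Proof.
rewrite /piD /qpoch (prodr_const_ord (p ^+ D) i) -big_split /=.
apply: eq_bigr => r _.
have Hp : p ^+ D != 0 by rewrite pX_neq0.
move: Hp; move: (p ^+ D) (p ^+ r) => a b Ha; field; done.
Qed.

Lemma F2 (b y c : C) i : y * b = c -> PiY y c i = qpoch b p i * y ^+ i.
Proof.
move=> Hc; rewrite /PiY /qpoch (prodr_const_ord y i) -big_split /=.
apply: eq_bigr => r _; rewrite -Hc; ring.
Qed.

Lemma F3 i L : qpoch (p ^+ N) p i * qpoch (p ^+ (N + i)) p L
   = qpoch (p ^+ N) p L * qpoch (p ^+ (N + L)) p i.
Proof. by rewrite !exprD -!qpD addnC. Qed.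

Lemma F4 (c : C) D i : (i <= D)%N -> qpoch c p i * Om c D i = qpoch c p D.
Proof.
move=> H; rewrite -{2}(subnKC H) qpD /Om /qpoch; congr (_ * _).
by apply: eq_bigr => r _; rewrite exprD mulrA.
Qed.

Lemma E0_term D d j i : (i <= D)%N ->
  let y := p ^+ j.+1 / p ^+ D in
  let c := p ^+ (N + j + d).+1 in
  aco D d i * G i j d
  = ((1 - p ^+ N) * p ^+ (N * j) * qpoch p p (j + d)
      / (qpoch (p ^+ N) p (j + d).+1 * qpoch c p D))
    * (gam D i * PiY y c i * Om c D i).
Proof.
move=> Hi y c.
have HpD : p ^+ D != 0 by rewrite pX_neq0.
have Hyb : y * p ^+ (N + d + D) = c.
  rewrite /y /c -addnS.
  rewrite (_ : (N + d + D) = (D + (N + d)))%N; last by rewrite addnC.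
  rewrite exprD mulrA mulfVK // -exprD; congr (_ ^+ _); lia.
rewrite /gam F1 (F2 _ _ _ i Hyb).
have HCi : qpoch c p i != 0 by rewrite qp_neq0.
have HOm : Om c D i = qpoch c p D / qpoch c p i.
  by rewrite -(F4 _ _ _ Hi) [qpoch c p i * _]mulrC mulfK.
rewrite HOm.
have HNi : qpoch (p ^+ N) p i != 0 by rewrite qp_neq0.
have HGL : qpoch (p ^+ (N + i)) p (j + d).+1
     = qpoch (p ^+ N) p (j + d).+1 * qpoch c p i / qpoch (p ^+ N) p i.
  have E3 := F3 i (j + d).+1.
  have Ec : p ^+ (N + (j + d).+1) = c by rewrite /c; congr (_ ^+ _); lia.
  rewrite Ec in E3.
  by rewrite -E3 [qpoch (p ^+ N) p i * _]mulrC mulfK.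
rewrite /aco /G HGL.
have Ey : y ^+ i = (p ^+ j) ^+ i * p ^+ i / (p ^+ D) ^+ i.
  by rewrite /y expr_div_n exprSr exprMn.
rewrite Ey (_ : p ^+ ((N + i) * j) = p ^+ (N * j) * (p ^+ j) ^+ i); last first.
  by rewrite -exprM -exprD; congr (_ ^+ _); lia.
have HPi : qpoch p p i != 0 by have := qp_neq0 1 i isT; rewrite expr1.
have HNL : qpoch (p ^+ N) p (j + d).+1 != 0 by rewrite qp_neq0.
have HCD : qpoch c p D != 0 by rewrite qp_neq0.
have HDi : (p ^+ D) ^+ i != 0 by rewrite expf_neq0.
have Hji : (p ^+ j) ^+ i != 0 by rewrite expf_neq0 // pX_neq0.
have Hpi : p ^+ i != 0 by rewrite pX_neq0.
move: HCi HNi HPi HNL HCD HDi Hji Hpi.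
move: (p ^+ N) (qpoch c p i) (qpoch (p ^+ N) p i) (qpoch p p i) (qpoch (p ^+ N) p (j + d).+1)
  (qpoch c p D) ((p ^+ D) ^+ i) ((p ^+ j) ^+ i) (p ^+ i)
  (qpoch (p ^- D) p i) (qpoch (p ^+ (N + d + D)) p i) (p ^+ (N * j)) (qpoch p p (j + d)).
move=> a13 a1 a2 a3 a4 a5 a6 a7 a8 a9 a10 a11 a12 H1 H2 H3 H4 H5 H6 H7 H8.
field.
by rewrite H1 H2 H3 H4 H5 H6.
Qed.


Definition Ksc j d D := (1 - p ^+ N) * p ^+ (N * j) * qpoch p p (j + d)
      / (qpoch (p ^+ N) p (j + d).+1 * qpoch (p ^+ (N + j + d).+1) p D).

Lemma E0 D d j : (j <= D)%N ->
  \sum_(i < D.+1) aco D d i * G i j d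
  = Ksc j d D * qpoch (p ^+ j.+1 / p ^+ D) p D.
Proof.
move=> Hj.
rewrite (eq_bigr (fun i : 'I_D.+1 => Ksc j d D *
     (gam D i * PiY (p ^+ j.+1 / p ^+ D) (p ^+ (N + j + d).+1) i
        * Om (p ^+ (N + j + d).+1) D i))); last first.
  by move=> i _; rewrite E0_term // -ltnS ltn_ord.
by rewrite -big_distrr /= qCV.
Qed.

Lemma qp_y_zero D j : (j < D)%N -> qpoch (p ^+ j.+1 / p ^+ D) p D = 0.
Proof.
move=> Hj.
have Hr : (D - j.+1 < D)%N by lia.
rewrite /qpoch (bigD1 (Ordinal Hr)) //= .
have -> : p ^+ j.+1 / p ^+ D * p ^+ (D - j.+1) = 1.
  rewrite mulrAC -exprD (_ : (j.+1 + (D - j.+1) = D)%N); last by lia.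
  by rewrite mulfV // pX_neq0.
by rewrite subrr mul0r.
Qed.

Lemma qp_y_diag D : qpoch (p ^+ D.+1 / p ^+ D) p D = qpoch p p D.
Proof. by rewrite exprS mulfK // pX_neq0. Qed.

Definition Esum D d k j := \sum_(i < D.+1) aco D d i * G (k + i) j d.

Lemma Erec D d k j : Esum D d k.+1 j = p ^+ j * (Esum D d k j - Esum D d k j.+1).
Proof.
rewrite /Esum -sumrB big_distrr /=; apply: eq_bigr => i _.
rewrite addSn G_krec; ring.
Qed.

Lemma Ezero D d k j : (k + j < D)%N -> Esum D d k j = 0.
Proof.
elim: k j => [|k IH] j H.
  rewrite /Esum (eq_bigr (fun i : 'I_D.+1 => aco D d i * G i j d)) //.
  by rewrite E0 ?qp_y_zero ?mulr0 //; lia.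
by rewrite Erec !IH ?subrr ?mulr0 //; lia.
Qed.

Lemma Ediag D d k : (k <= D)%N ->
  Esum D d k (D - k) = (\prod_(i < k) (- p ^+ (D - i.+1))) * Esum D d 0 D.
Proof.
elim: k => [|k IH] H; first by rewrite big_ord0 mul1r subn0.
have Ej : (D - k = (D - k.+1).+1)%N by lia.
rewrite Erec Ezero; last by lia.
rewrite -Ej IH; last by lia.
rewrite big_ord_recr /=; ring.
Qed.

Lemma LcD D : qpoch (p ^- D) p D * p ^+ D * \prod_(i < D) (- p ^+ (D - i.+1))
   = qpoch p p D.
Proof.
rewrite {2}(prodr_const_ord p D) /qpoch -!big_split /=.
rewrite (eq_bigr (fun i : 'I_D => 1 - p ^+ (D - i))); last first.
  move=> i _.
  have Hi := ltn_ord i.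
  have E1 : (D - i = (D - i.+1).+1)%N by lia.
  have E2 : (D = (i + (D - i.+1)).+1)%N by lia.
  rewrite E1; move: (D - i.+1)%N E2 => e E2.
  rewrite {1}E2 exprS exprD exprS.
  have Hp : p != 0 by rewrite gt_eqF.
  have Hi' : p ^+ i != 0 by rewrite pX_neq0.
  have He : p ^+ e != 0 by rewrite pX_neq0.
  move: Hi' He; move: (p ^+ i) (p ^+ e) => a b Ha Hb.
  field; by rewrite Hp Ha Hb.
rewrite -(big_mkord xpredT (fun i => 1 - p ^+ (D - i))).
rewrite -(big_mkord xpredT (fun i => 1 - p * p ^+ i)).
rewrite big_rev_mkord subn0 big_mkord.
apply: eq_bigr => i _.
have Hi := ltn_ord i.
rewrite -exprS; congr (1 - p ^+ _); lia.
Qed.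


Definition Kfin l m := (1 - p ^+ N) / (1 - p ^+ (N + l + m))
   * (qpoch p p l * qpoch p p m) / (qpoch (p ^+ N) p l * qpoch (p ^+ N) p m).

Lemma Core D d :
  \sum_(k1 < D.+1) \sum_(k2 < D.+1) aco D d k1 * aco D d k2 * G (k1 + k2) 0 d
  = p ^+ (D * N) * Kfin (D + d) D.
Proof.
rewrite (eq_bigr (fun k1 : 'I_D.+1 => aco D d k1 * Esum D d k1 0)); last first.
  by move=> k1 _; rewrite /Esum big_distrr /=; apply: eq_bigr => k2 _; rewrite mulrA.
rewrite big_ord_recr /= big1; last first.
  by move=> k1 _; rewrite Ezero ?mulr0 // addn0 ltn_ord.
have -> : Esum D d D 0 = Esum D d D (D - D) by rewrite subnn.
rewrite add0r Ediag //.
have E0D : Esum D d 0 D = Ksc D d D * qpoch p p D.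
  rewrite /Esum (eq_bigr (fun i : 'I_D.+1 => aco D d i * G i D d)) //.
  by rewrite E0 // qp_y_diag.
rewrite E0D.
have HL := LcD D.
rewrite /aco.
have Hb : qpoch (p ^+ (N + d + D)) p D
   = (1 - p ^+ (N + d + D)) * qpoch (p ^+ (N + D + d).+1) p D
      / (1 - p ^+ (N + d + D) * p ^+ D).
  have E1 := qpSl (p ^+ (N + d + D)) p D.
  rewrite qpS -exprSr (_ : (N + d + D).+1 = (N + D + d).+1)%N in E1; last by lia.
  rewrite -E1 mulfK //.
  by rewrite -exprD onem_neq0 // !addn_gt0 hN.
rewrite Hb /Ksc.
have HNd : qpoch (p ^+ N) p (D + d).+1
   = qpoch (p ^+ N) p (D + d) * (1 - p ^+ (N + d + D)).
  by rewrite qpS -exprD; congr (_ * (1 - p ^+ _)); lia.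
rewrite HNd /Kfin.
have Ee : p ^+ (N + d + D) * p ^+ D = p ^+ (N + (D + d) + D).
  by rewrite -exprD; congr (_ ^+ _); lia.
rewrite Ee.
have H1 : 1 - p ^+ (N + d + D) != 0 by rewrite onem_neq0 // !addn_gt0 hN.
have H2 : 1 - p ^+ (N + (D + d) + D) != 0 by rewrite onem_neq0 // !addn_gt0 hN.
have H3 : qpoch (p ^+ N) p (D + d) != 0 by rewrite qp_neq0.
have H4 : qpoch (p ^+ N) p D != 0 by rewrite qp_neq0.
have H5 : qpoch p p D != 0 by have := qp_neq0 1 D isT; rewrite expr1.
have H6 : qpoch (p ^+ (N + D + d).+1) p D != 0 by rewrite qp_neq0.
have H7 : \prod_(i < D) - p ^+ (D - i.+1) != 0.
  rewrite prodf_seq_neq0; apply/allP => i _ /=; by rewrite oppr_eq0 pX_neq0.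
have H8 : p ^+ D != 0 by rewrite pX_neq0.
have HL' : qpoch (p ^- D) p D = qpoch p p D / (p ^+ D * \prod_(i < D) - p ^+ (D - i.+1)).
  rewrite -HL; move: H7 H8; move: (p ^+ D) (\prod_(i < D) - p ^+ (D - i.+1)) => u v Hv Hu.
  by field; rewrite Hu Hv.
rewrite HL' (mulnC D N) exprM.
move: H1 H2 H3 H4 H5 H6 H7 H8.
move: (p ^+ N) (qpoch (p ^+ (N + D + d).+1) p D) (qpoch (p ^+ N) p (D + d))
  (qpoch (p ^+ N) p D) (qpoch p p D) (p ^+ (N + d + D)) (p ^+ (N + (D + d) + D))
  (p ^+ D) (\prod_(i < D) - p ^+ (D - i.+1)) (qpoch p p (D + d)).
move=> a1 a2 a3 a4 a5 a6 a7 a9 a10 a11 H1 H2 H3 H4 H5 H6 H7 H8.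
field.
by rewrite H1 H2 H3 H4 H5 H6 H7 H8.
Qed.


Lemma G_swap s d : G s d 0 = p ^+ ((N + s) * d) * G s 0 d.
Proof. by rewrite /G !addn0 add0n muln0 expr0 mulr1; ring. Qed.

End Scal.
Arguments G {C}.
Arguments aco {C}.
Arguments Kfin {C}.

Section Alg.
Variable C : numClosedFieldType.
Variable A : lalgType C.
Variable star : A -> A.
Hypothesis stD : forall x y, star (x + y) = star x + star y.
Hypothesis stZ : forall (a : C) x, star (a *: x) = Num.conj a *: star x.
Hypothesis stM : forall x y, star (x * y) = star y * star x.
Hypothesis stK : forall x, star (star x) = x.

Lemma star1 : star 1 = 1.
Proof.
have H : forall y, star y = star y * star 1 by move=> y; rewrite -stM mul1r.
by have := H (star 1); rewrite stK mul1r => <-.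
Qed.

Lemma scal_central (b : C) (y : A) : b *: y = y * (b *: 1).
Proof.
set a := Num.conj b.
have Hb : Num.conj a = b by rewrite /a conjCK.
have := stM ((a *: 1)) (star y).
rewrite stK stZ star1 Hb -scalerAl mul1r stZ stK Hb => <-.
done.
Qed.

Lemma scalerAr' (a : C) (x y : A) : x * (a *: y) = a *: (x * y).
Proof.
by rewrite -{1}(mul1r y) scalerAl mulrA -scal_central -scalerAl.
Qed.

Lemma star0 : star 0 = 0.
Proof. by have := stD 0 0; rewrite addr0 => /eqP; rewrite addrC -subr_eq subrr eq_sym => /eqP. Qed.

Lemma star_sum I (r : seq I) (P : pred I) (F : I -> A) :
  star (\sum_(i <- r | P i) F i) = \sum_(i <- r | P i) star (F i).
Proof. exact: (big_morph star stD star0). Qed.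

Lemma star_exp x k : star (x ^+ k) = star x ^+ k.
Proof.
elim: k => [|k IH]; first by rewrite !expr0 star1.
by rewrite exprS stM IH exprSr.
Qed.

End Alg.

Section Alg2.
Variable C : numClosedFieldType.
Variable A : lalgType C.
Hypothesis sAr : forall (a : C) (x y : A), x * (a *: y) = a *: (x * y).
Variable p : C.
Hypothesis hp0 : 0 < p.
Hypothesis hp1 : p < 1.
Variable N : nat.
Hypothesis hN : (0 < N)%N.
Variables Z W Q : A.
Hypothesis hQZW : Q + Z * W = 1.
Hypothesis hWZ : W * Z = Z * W + (1 - p) *: Q.
Variable h : A -> C.
Hypothesis hD : forall x y, h (x + y) = h x + h y.
Hypothesis hZ : forall (a : C) x, h (a *: x) = a * h x.
Hypothesis hZW : forall j, h (Z ^+ j * W ^+ j) = G p N 0 j 0.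

Let t := p^-1.
Lemma pt : p * t = 1.
Proof. by rewrite /t mulfV // gt_eqF. Qed.

Lemma ZW_eq : Z * W = 1 - Q.
Proof. by rewrite -hQZW addrC addKr. Qed.

Lemma WZ_eq : W * Z = 1 - p *: Q.
Proof. by rewrite hWZ ZW_eq scalerBl scale1r addrA subrK. Qed.

Lemma Q_eq : Q = 1 - Z * W.
Proof. by rewrite ZW_eq opprB addrC subrK. Qed.

Lemma QZ_eq : Q * Z = p *: (Z * Q).
Proof.
rewrite {1}Q_eq mulrBl mul1r -mulrA WZ_eq mulrBr mulr1 sAr.
by rewrite opprB addrC subrK.
Qed.

Lemma ZQ_eq : Z * Q = t *: (Q * Z).
Proof. by rewrite QZ_eq scalerA mulrC pt scale1r. Qed.

Lemma WQ_eq : W * Q = p *: (Q * W).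
Proof.
rewrite {1}Q_eq mulrBr mulr1 mulrA WZ_eq mulrBl mul1r -scalerAl.
by rewrite opprB addrC subrK.
Qed.

Lemma ZjQ j : Z ^+ j * Q = t ^+ j *: (Q * Z ^+ j).
Proof.
elim: j => [|j IH]; first by rewrite !expr0 mul1r mulr1 scale1r.
rewrite (exprSr Z j) -mulrA ZQ_eq sAr mulrA IH -scalerAl -mulrA -(exprSr Z j) scalerA.
by rewrite -exprS.
Qed.

Lemma WdQ d : W ^+ d * Q = p ^+ d *: (Q * W ^+ d).
Proof.
elim: d => [|d IH]; first by rewrite !expr0 mul1r mulr1 scale1r.
rewrite (exprS W d) -mulrA IH sAr mulrA WQ_eq -scalerAl -mulrA -(exprS W d) scalerA.
by rewrite -exprSr.
Qed.

Lemma ZdQs d s : Z ^+ d * Q ^+ s = t ^+ (d * s) *: (Q ^+ s * Z ^+ d).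
Proof.
elim: s => [|s IH]; first by rewrite muln0 !expr0 mul1r mulr1 scale1r.
rewrite (exprS Q s) mulrA ZjQ -scalerAl -[Q * Z ^+ d * _]mulrA IH sAr scalerA mulrA -exprD.
by rewrite mulnS.
Qed.

Lemma cfu : commr_rmorph (in_alg A) Q.
Proof. by move=> c; rewrite /GRing.comm /= mulr_algl sAr mulr1. Qed.


Local Notation ev := (horner_morph cfu).

Lemma evX : ev 'X = Q.
Proof. exact: horner_morphX. Qed.

Lemma evC c : ev c%:P = c%:A.
Proof. exact: horner_morphC. Qed.

Lemma evM f g : ev (f * g) = ev f * ev g.
Proof. exact: rmorphM. Qed.

Lemma evD f g : ev (f + g) = ev f + ev g.
Proof. exact: rmorphD. Qed.

Lemma evB f g : ev (f - g) = ev f - ev g.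
Proof. exact: rmorphB. Qed.

Lemma ev1 : ev 1 = 1.
Proof. exact: rmorph1. Qed.

Lemma evCM c f : ev (c%:P * f) = c *: ev f.
Proof. by rewrite evM evC mulr_algl. Qed.

Lemma evXn k : ev ('X ^+ k) = Q ^+ k.
Proof. by rewrite rmorphXn; congr (_ ^+ _); exact: evX. Qed.

Lemma ev_sum I (r : seq I) (P : pred I) (F : I -> {poly C}) :
  ev (\sum_(i <- r | P i) F i) = \sum_(i <- r | P i) ev (F i).
Proof. exact: rmorph_sum. Qed.

Lemma ev_comm f g : ev f * ev g = ev g * ev f.
Proof. by rewrite -!evM mulrC. Qed.

Lemma evQ f : Q * ev f = ev f * Q.
Proof. by have := ev_comm 'X f; rewrite evX. Qed.

Definition qX (a r : C) j : {poly C} := \prod_(i < j) (1 - (a * r ^+ i)%:P * 'X).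

Lemma qXS a r j : qX a r j.+1 = qX a r j * (1 - (a * r ^+ j)%:P * 'X).
Proof. by rewrite /qX big_ord_recr. Qed.

Lemma qX0 a r : qX a r 0 = 1.
Proof. by rewrite /qX big_ord0. Qed.

Lemma ZWj j : Z ^+ j * W ^+ j = ev (qX 1 t j).
Proof.
elim: j => [|j IH]; first by rewrite !expr0 mulr1 qX0 ev1.
rewrite qXS evM evB ev1 evCM evX -IH.
rewrite (exprSr Z j) exprS -mulrA [Z * (W * _)]mulrA ZW_eq mulrBl mul1r mulrBr.
rewrite mul1r [Z ^+ j * (Q * _)]mulrA ZjQ -scalerAl -mulrA IH.
rewrite evQ.
by rewrite mulrBr mulr1 sAr.

Qed.


Lemma WZd d : W ^+ d * Z ^+ d = ev (qX p p d).
Proof.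
elim: d => [|d IH]; first by rewrite !expr0 mulr1 qX0 ev1.
rewrite qXS evM evB ev1 evCM evX -IH.
rewrite (exprSr W d) (exprS Z d) -mulrA [W * (Z * _)]mulrA WZ_eq mulrBl mul1r mulrBr.
rewrite -scalerAl sAr mulrA WdQ -scalerAl -mulrA IH scalerA evQ.
by rewrite mulrBr mulr1 sAr.
Qed.

Lemma h0 : h 0 = 0.
Proof. by have := hZ 0 0; rewrite scale0r mul0r. Qed.

Lemma hNeg x : h (- x) = - h x.
Proof. by rewrite -scaleN1r hZ mulN1r. Qed.

Lemma hB x y : h (x - y) = h x - h y.
Proof. by rewrite hD hNeg. Qed.

Lemma h_sum I (r : seq I) (P : pred I) (F : I -> A) :
  h (\sum_(i <- r | P i) F i) = \sum_(i <- r | P i) h (F i).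
Proof. exact: (big_morph h hD h0). Qed.

Definition L f := h (ev f).

Lemma LB f g : L (f - g) = L f - L g.
Proof. by rewrite /L evB hB. Qed.

Lemma LCM c f : L (c%:P * f) = c * L f.
Proof. by rewrite /L evCM hZ. Qed.

Lemma L_sum I (r : seq I) (P : pred I) (F : I -> {poly C}) :
  L (\sum_(i <- r | P i) F i) = \sum_(i <- r | P i) L (F i).
Proof. by rewrite /L ev_sum h_sum. Qed.

Lemma ptj j : p ^+ j * t ^+ j = 1.
Proof. by rewrite -exprMn pt expr1n. Qed.

Lemma Lk k j d : L ('X ^+ k.+1 * qX 1 t j * qX p p d)
  = p ^+ j * (L ('X ^+ k * qX 1 t j * qX p p d) - L ('X ^+ k * qX 1 t j.+1 * qX p p d)).
Proof.
have E : 'X ^+ k * qX 1 t j.+1 * qX p p d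
   = 'X ^+ k * qX 1 t j * qX p p d - (t ^+ j)%:P * ('X ^+ k.+1 * qX 1 t j * qX p p d).
  rewrite qXS mul1r exprS; ring.
rewrite E LB LCM opprB addrC subrK mulrA ptj mul1r //.
Qed.

Lemma Ld k j d : L ('X ^+ k * qX 1 t j * qX p p d.+1)
  = L ('X ^+ k * qX 1 t j * qX p p d) - p ^+ d.+1 * L ('X ^+ k.+1 * qX 1 t j * qX p p d).
Proof.
have E : 'X ^+ k * qX 1 t j * qX p p d.+1
   = 'X ^+ k * qX 1 t j * qX p p d - (p ^+ d.+1)%:P * ('X ^+ k.+1 * qX 1 t j * qX p p d).
  rewrite qXS exprS [in RHS]exprS; ring.
by rewrite E LB LCM.
Qed.

Lemma Lval d k j : L ('X ^+ k * qX 1 t j * qX p p d) = G p N k j d.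
Proof.
elim: d k j => [|d IHd] k j.
  elim: k j => [|k IHk] j.
    by rewrite /L expr0 mul1r qX0 mulr1 -ZWj hZW.
  by rewrite Lk !IHk -G_krec.
by rewrite Ld !IHd -G_drec.
Qed.


Definition Pp D d : {poly C} := \sum_(k < D.+1) (aco p N D d k)%:P * 'X ^+ k.

Lemma PpPp D d (F : {poly C}) :
  Pp D d * F * Pp D d = \sum_(k1 < D.+1) \sum_(k2 < D.+1)
     (aco p N D d k1 * aco p N D d k2)%:P * ('X ^+ (k1 + k2) * F).
Proof.
rewrite /Pp -mulrA big_distrl /=; apply: eq_bigr => k1 _.
rewrite big_distrr /= big_distrr /=; apply: eq_bigr => k2 _.
by rewrite [in RHS]polyCM [in RHS]exprD; ring.
Qed.

Lemma case1 D d : L (Pp D d * qX p p d * Pp D d) = p ^+ (D * N) * Kfin p N (D + d) D.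
Proof.
rewrite PpPp L_sum -Core //.
apply: eq_bigr => k1 _; rewrite L_sum; apply: eq_bigr => k2 _.
by rewrite LCM -(Lval d _ 0) qX0 mulr1.
Qed.

Lemma hZfW d s : h (Z ^+ d * Q ^+ s * W ^+ d) = p ^+ (N * d) * G p N s 0 d.
Proof.
rewrite ZdQs -scalerAl -mulrA ZWj -evXn -evM hZ.
have := Lval 0 s d; rewrite qX0 mulr1 /L => ->.
rewrite G_swap // mulrA; congr (_ * _).
rewrite mulnDl exprD (mulnC s d) mulrCA -exprMn /t mulVf ?gt_eqF // expr1n mulr1.
by [].
Qed.

Lemma case2 D d : h (Z ^+ d * ev (Pp D d * Pp D d) * W ^+ d)
   = p ^+ (N * d) * (p ^+ (D * N) * Kfin p N (D + d) D).
Proof.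
have := PpPp D d 1; rewrite !mulr1 => ->.
rewrite ev_sum big_distrr big_distrl h_sum -Core // big_distrr.
apply: eq_bigr => k1 _ /=.
rewrite ev_sum big_distrr big_distrl h_sum big_distrr.
apply: eq_bigr => k2 _ /=.
rewrite mulr1 evCM evXn sAr -scalerAl hZ hZfW; ring.
Qed.


Lemma LJ_ev alpha D d : (alpha + 1 = N)%N ->
  little_qJacobi alpha d D p Q = ev (Pp D d).
Proof.
move=> Ha; rewrite /little_qJacobi /Pp ev_sum; apply: eq_bigr => k _.
rewrite evCM evXn /aco Ha.
by have -> : (alpha + d + D + 1 = N + d + D)%N by lia.
Qed.

End Alg2.

Lemma qp_real (C : numClosedFieldType) (a r : C) k :
  a \is Num.real -> r \is Num.real -> qpoch a r k \is Num.real.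
Proof.
move=> Ha Hr; rewrite /qpoch rpred_prod // => i _.
by rewrite rpredB ?rpred1 // rpredM // rpredX.
Qed.

Lemma aco_real (C : numClosedFieldType) (p : C) N D d k :
  p \is Num.real -> aco p N D d k \is Num.real.
Proof.
move=> Hp; rewrite /aco rpredM ?rpredX // rpred_div ?rpredM ?qp_real ?rpredX //.
by rewrite rpredV rpredX.
Qed.

Theorem proposition3p3p2 (C : numClosedFieldType) (A : lalgType C)
  (n : nat) (q : C) (z w : nat -> A) (star : A -> A) (h : A -> C)
  (l m : nat) :
  (2 <= n)%N -> 0 < q -> q < 1 ->
  tZn_structure n q z w star ->
  is_hn n q z w h ->
  h (star (qdisk n q z w (n - 2) l m) * qdisk n q z w (n - 2) l m)
  = c_const q (n - 2) l m.
Proof.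
move=> Hn Hq0 Hq1 [[r1 r2 r3 r4 r5] [s1 s2 s3 s4 s5]] [hD hZ hmon].
case: n Hn r1 r2 r3 r4 r5 s1 hmon => [|N] // Hn r1 r2 r3 r4 r5 s1 hmon.
have hN : (0 < N)%N by [].
set p := q ^+ 2.
have hp0 : 0 < p by rewrite exprn_gt0.
have hp1 : p < 1 by rewrite /p exprn_ilt1 ?ltW.
have sAr : forall (a : C) (x y : A), x * (a *: y) = a *: (x * y).
  exact: (@scalerAr' _ _ _ s3 s4 s5).
set Z := z N. set W := w N. set Q := Qsum N.+1 z w N.
have hQZW : Q + Z * W = 1.
  rewrite -r5 /Q /Qsum.
  have E1 : \sum_(k < N.+1 | (k < N.+1)%N) z k * w k = \sum_(k < N.+1) z k * w k.
    by apply: eq_bigl => k; rewrite ltn_ord.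
  have E2 : \sum_(k < N.+1 | (k < N)%N) z k * w k = \sum_(k < N) z k * w k.
    rewrite big_mkcond big_ord_recr /= ltnn addr0; apply: eq_bigr => i _.
    by rewrite ltn_ord.
  by rewrite E1 E2 big_ord_recr.
have hWZ : W * Z = Z * W + (1 - p) *: Q by apply: r4.
have hZW : forall j, h (Z ^+ j * W ^+ j) = G p N 0 j 0.
  move=> j.
  pose lam := fun i : nat => if i == N then j else 0%N.
  have Hm : zw_mon N.+1 z w lam lam = Z ^+ j * W ^+ j.
    rewrite /zw_mon big_ord_recr /= big_ord_recl /= /lam eqxx subn0 eqxx.
    rewrite big1 ?mul1r; last by move=> i _; rewrite (ltn_eqF (ltn_ord i)) expr0.
    rewrite big1 ?mulr1 //; move=> i _.
    have Hi : (N - bump 0 i < N)%N by rewrite /bump; lia.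
    by rewrite (ltn_eqF Hi) expr0.
  rewrite -Hm hmon /h_value.
  have -> : [forall i : 'I_N.+1, lam i == lam i] = true.
    by apply/forallP => i; rewrite eqxx.
  have S1 : (\sum_(i < N.+1) (N.+1.-1 - i) * lam i = 0)%N.
    rewrite big_ord_recr /= /lam eqxx subnn mul0n addn0 big1 // => i _.
    by rewrite (ltn_eqF (ltn_ord i)) muln0.
  have S2 : \prod_(i < N.+1) qpoch (q ^- 2) (q ^- 2) (lam i) = qpoch (q ^- 2) (q ^- 2) j.
    rewrite big_ord_recr /= /lam eqxx big1 ?mul1r // => i _.
    by rewrite (ltn_eqF (ltn_ord i)) qp0.
  have S3 : (\sum_(i < N.+1) lam i = j)%N.
    rewrite big_ord_recr /= /lam eqxx big1 ?add0n // => i _.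
    by rewrite (ltn_eqF (ltn_ord i)).
  rewrite S1 S2 S3 muln0 expr0 invr1 mul1r /=.
  exact: G_base.
have stQ : star Q = Q.
  rewrite /Q /Qsum (@star_sum _ _ _ s2); apply: eq_bigr => k _.
  by rewrite s4 -(s1 k (ltn_ord k)) s5.
have stZ : star Z = W by apply: s1.
have stW : star W = Z by rewrite -stZ s5.
have Ha : (N.+1 - 2 + 1 = N)%N by lia.
have preal : p \is Num.real by rewrite gtr0_real.
have stLJ : forall alpha d D, star (little_qJacobi alpha d D p Q) = little_qJacobi alpha d D p Q.
  move=> alpha d D; rewrite /little_qJacobi (@star_sum _ _ _ s2); apply: eq_bigr => k _.
  rewrite s3 (@star_exp _ _ _ s4 s5) stQ conj_Creal //.
  apply: rpredM; last by apply: rpredX.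
  apply: rpredM.
    by apply: rpredM; apply: qp_real => //; rewrite ?rpredV; apply: rpredX.
  by rewrite rpredV; apply: rpredM; apply: qp_real => //; apply: rpredX.
rewrite /qdisk /=; case: ifP => Hml.
  rewrite s4 stLJ (@star_exp _ _ _ s4 s5) stZ.
  rewrite (@LJ_ev C A sAr p hp0 hp1 N hN Q (N.+1 - 2) m (l - m) Ha).
  rewrite -/Z mulrA -[_ * W ^+ _ * Z ^+ _]mulrA (@WZd C A sAr p Z W Q hQZW hWZ (l - m)).
  rewrite -!rmorphM.
  have := @case1 C A sAr p hp0 hp1 N hN Z W Q hQZW hWZ h hD hZ hZW m (l - m).
  rewrite /L => ->.
  rewrite (subnKC Hml).
  have E1 : (N.+1 - 2 + l + m + 1 = N + l + m)%N by lia.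
  rewrite /Kfin /c_const E1 Ha -mulnA !exprM -/p.
  ring.
have Hlm : (l <= m)%N by move/negbT: Hml; rewrite -ltnNge; apply: ltnW.
rewrite s4 (@star_exp _ _ _ s4 s5) stLJ.
rewrite (@LJ_ev C A sAr p hp0 hp1 N hN Q (N.+1 - 2) l (m - l) Ha).
rewrite -/W stW mulrA -[Z ^+ _ * _ * _]mulrA -rmorphM.
have := @case2 C A sAr p hp0 hp1 N hN Z W Q hQZW hWZ h hD hZ hZW l (m - l).
move=> ->.
rewrite (subnKC Hlm) mulrA.
have Ep : p ^+ (N * (m - l)) * p ^+ (l * N) = p ^+ (m * N).
  by rewrite -exprD; congr (_ ^+ _); nia.
have E1 : (N.+1 - 2 + l + m + 1 = N + l + m)%N by lia.
rewrite Ep /Kfin /c_const E1 Ha -mulnA !exprM -/p (addnAC N m l).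
rewrite [qpoch p p m * _]mulrC [qpoch (p ^+ N) p m * _]mulrC; ring.
Qed.
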